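(* Let $\mathcal{J}$ be an ideal on $\omega$ which is good. Then $\min\{\mathrm{cov}^{+}_{h}(\mathcal{J}),\mathfrak{b}\}\leq\mathfrak{a}(\mathcal{J})$.
   Context: An ideal on a countable set $X$ is a family of subsets of $X$ closed under subsets and finite unions, containing all finite sets and not containing $X$. $\mathcal{J}^{+}=\mathcal{P}(\omega)\setminus\mathcal{J}$ denotes the $\mathcal{J}$-positive sets. For $X\in\mathcal{J}^+$, $\mathcal{J}|_X=\{A\subseteq X: A\in\mathcal{J}\}$, an ideal on $X$. $\mathfrak{a}(\mathcal{J})$ is the smallest size of an uncountable family $\mathcal{A}\subseteq\mathcal{J}^{+}$ which is maximal with respect to the property that $A\cap B\in\mathcal{J}$ for all distinct $A,B\in\mathcal{A}$. $\mathrm{cov}^{+}(\mathcal{J})=\min\{|\mathcal{F}|:\mathcal{F}\subseteq\mathcal{J}$ and for every $X\in\mathcal{J}^{+}$ there is $F\in\mathcal{F}$ with $|X\cap F|=\omega\}$, and $\mathrm{cov}^{+}_{h}(\mathcal{J})=\min\{\mathrm{cov}^{+}(\mathcal{J}|_{X}):X\in\mathcal{J}^{+}\}$. $\mathfrak{b}$ is the least size of a family in $\omega^\omega$ unbounded with respect to eventual domination $\leq^*$. $\mathcal{J}$ is called good if every uncountable family $\mathcal{F}\subseteq\mathcal{J}^{+}$ has a subfamily $\{B_{n}:n\in\omega\}\subseteq\mathcal{F}$ such that for every $f\in\omega^{\omega}$ there is a sequence $\{C_{n}:n\in\omega\}\subseteq\mathcal{J}$ with $C_{n}\subseteq B_{n}\setminus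 f(n)$ for every $n$ such that $\bigcup_{n}C_{n}\in\mathcal{J}^{+}$. *)

(* Defs.v *)
From mathcomp Require Import all_boot all_classical.
Set Implicit Arguments. Unset Strict Implicit. Unset Printing Implicit Defensive.
Local Open Scope classical_set_scope.
Local Open Scope card_scope.

Definition is_ideal (J : set (set nat)) : Prop :=
  (forall A B, J B -> A `<=` B -> J A) /\
  (forall A B, J A -> J B -> J (A `|` B)) /\
  (forall A, finite_set A -> J A) /\
  ~ J setT.

Definition Jpos (J : set (set nat)) (X : set nat) : Prop := ~ J X.

Definition J_mad (J : set (set nat)) (A : set (set nat)) : Prop :=
  (forall X, A X -> Jpos J X) /\
  (forall X Y, A X -> A Y -> X <> Y -> J (X `&` Y)) /\
  (forall X, Jpos J X -> exists2 Y, A Y & Jpos J (X `&` Y)).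

(* F witnesses cov^+(J|_X): F is a subfamily of J|_X and meets every
   J|_X-positive set (a subset of X not in J) in an infinite set. *)
Definition cov_plus_witness (J : set (set nat)) (X : set nat)
  (F : set (set nat)) : Prop :=
  (forall G, F G -> G `<=` X /\ J G) /\
  (forall Y, Y `<=` X -> Jpos J Y -> exists2 G, F G & infinite_set (Y `&` G)).

Definition le_star (f g : nat -> nat) : Prop :=
  exists N, forall n, (N <= n)%N -> (f n <= g n)%N.

Definition unbounded_family (D : set (nat -> nat)) : Prop :=
  ~ exists g, forall f, D f -> le_star f g.

Definition good (J : set (set nat)) : Prop :=
  forall F : set (set nat), (forall X, F X -> Jpos J X) -> ~ countable F ->
  exists B : nat -> set nat, injective B /\ (forall n, F (B n)) /\
    forall f : nat -> nat, exists C : nat -> set nat,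
      (forall n, J (C n)) /\
      (forall n, C n `<=` [set k | B n k /\ (f n <= k)%N]) /\
      Jpos J (\bigcup_n C n).

(* Main.v *)
Require Import Defs.
From mathcomp Require Import all_boot all_classical.
Local Open Scope classical_set_scope.
Local Open Scope card_scope.

Lemma my_NNPP (P : Prop) : ~ ~ P -> P.
Proof. by case: (EM P) => // np /(_ np). Qed.

Lemma fin_bound (S : set nat) : finite_set S -> exists N, forall k, S k -> (k < N)%N.
Proof.
move=> /finite_seqP[s ->].
elim: s => [|x s [N HN]]; first by exists 0%N.
exists (maxn x.+1 N) => k /=; rewrite inE => /orP[/eqP ->|ks].
  by rewrite leq_max leqnn.
by rewrite leq_max (HN k ks) orbT.
Qed.

Lemma J_fin_union (J : set (set nat)) (C : nat -> set nat) :
  is_ideal J -> (forall n, J (C n)) ->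
  forall M, J [set k | exists2 n, (n < M)%N & C n k].
Proof.
move=> [Jsub [JU [Jfin JT]]] CJ; elim=> [|M IH].
  apply: Jsub (Jfin _ (finite_set0 _)) _ => k [n]; by [].
apply: Jsub (JU _ _ IH (CJ M)) _ => k [n nM Cnk].
rewrite ltnS leq_eqVlt in nM; case/orP: nM => [/eqP <-|nM]; first by right.
by left; exists n.
Qed.

Theorem mainTheorem1 (J : set (set nat)) :
  is_ideal J -> good J ->
  forall A : set (set nat), J_mad J A -> ~ countable A ->
    (exists X F, Jpos J X /\ cov_plus_witness J X F /\ F #<= A) \/
    (exists D : set (nat -> nat), unbounded_family D /\ D #<= A).
Proof.
move=> Jid Jgood A [Apos [Aad Amax]] Aunc.
have [Jsub [JU [Jfin JT]]] := Jid.
case: (EM (exists a, A a /\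
   cov_plus_witness J a ((fun b => b `&` a) @` (A `\ a)))) => [[a [Aa Wa]]|Hno].
  left; exists a, ((fun b => b `&` a) @` (A `\ a)); split; first exact: Apos.
  split=> //; apply: card_le_trans (card_image_le _ _) _; exact: card_le_setD.
have HY : forall a, exists Y : set nat, A a ->
    (Y `<=` a /\ Jpos J Y /\ forall b, A b -> b <> a -> finite_set (Y `&` b)).
  move=> a; case: (EM (A a)) => Aa; last by exists setT.
  apply: my_NNPP => nY; apply: Hno; exists a; split=> //; split.
    move=> G [b [Ab ba] <-]; split; first by move=> k [].
    by apply: Aad => //; move=> e; apply: ba; rewrite e.
  move=> Y YA YP; apply: my_NNPP => nG; apply: nY; exists Y => _.
  split=> //; split=> // b Ab ba; apply: my_NNPP => nf; apply: nG.
  exists (b `&` a); first by exists b.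
  move=> fin; apply: nf; apply: sub_finite_set fin => k [Yk bk]; split=> //.
  by split=> //; apply: YA.
have [Y HYp] := choice HY.
have Yinj : {in A &, injective Y}.
  move=> a b; rewrite !inE => Aa Ab Yab; apply: my_NNPP => ab.
  have [_ [YP Yfin]] := HYp a Aa.
  apply: YP; apply: Jfin; apply: sub_finite_set (Yfin b Ab (fun e => ab (esym e))).
  by move=> k Yk; split=> //; rewrite Yab in Yk; have [+ _] := HYp b Ab; apply.
have [B [Binj [BF Bgood]]] : exists B : nat -> set nat, injective B /\
    (forall n, (Y @` A) (B n)) /\
    forall f : nat -> nat, exists C : nat -> set nat,
      (forall n, J (C n)) /\
      (forall n, C n `<=` [set k | B n k /\ (f n <= k)%N]) /\
      Jpos J (\bigcup_n C n).
  apply: Jgood.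
    by move=> X [a Aa <-]; have [_ [+ _]] := HYp a Aa.
  move=> cY; apply: Aunc; apply: card_le_trans cY.
  by have /card_eqPle[_] := inj_card_eq Yinj.
have Hf : forall b, exists h : nat -> nat, forall n,
    finite_set (B n `&` b) -> forall k, B n k -> b k -> (k < h n)%N.
  move=> b; suff [h Hh] : {h : nat -> nat & forall n, finite_set (B n `&` b) ->
       forall k, B n k -> b k -> (k < h n)%N} by exists h.
  apply: (@choice _ _ (fun n N => finite_set (B n `&` b) ->
       forall k, B n k -> b k -> (k < N)%N)) => n.
  case: (EM (finite_set (B n `&` b))) => fin; last by exists 0%N.
  have [N HN] := fin_bound _ fin; exists N => _ k Bk bk; exact: HN.
have [f Hfp] := choice Hf.
right; exists (f @` A); split; last exact: card_image_le.
move=> [g Hg].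
have [C [CJ [CB Cpos]]] := Bgood g.
have [b Ab Cb] := Amax _ Cpos; apply: Cb.
have [N HN] := Hg (f b) (ex_intro2 _ _ b Ab erefl).
have [M1 HM1] : exists M, forall n, (M <= n)%N -> finite_set (B n `&` b).
  case: (EM (exists m, Y b = B m)) => [[m Hm]|nm].
    exists m.+1 => n Hn; have [a Aa Ha] := BF n.
    case: (EM (a = b)) => [eab|nab].
      by subst a; move: (Binj _ _ (etrans (esym Hm) Ha)) Hn => ->; rewrite ltnn.
    have [_ [_ Hfin]] := HYp a Aa; rewrite -Ha; exact: Hfin b Ab (fun e => nab (esym e)).
  exists 0%N => n _; have [a Aa Ha] := BF n.
  case: (EM (a = b)) => [eab|nab].
    by subst a; exfalso; apply: nm; exists n.
  have [_ [_ Hfin]] := HYp a Aa; rewrite -Ha; exact: Hfin b Ab (fun e => nab (esym e)).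
apply: Jsub (J_fin_union _ _ Jid CJ (maxn M1 N)) _.
move=> k [[n _ Cnk] bk]; exists n => //.
rewrite ltnNge; apply/negP => Mn.
have [Bnk gk] := CB n k Cnk.
have fin := HM1 n (leq_trans (leq_maxl _ _) Mn).
have := Hfp b n fin k Bnk bk.
have := HN n (leq_trans (leq_maxr _ _) Mn).
move=> h1 h2; have := leq_trans h2 (leq_trans h1 gk); by rewrite ltnn.
Qed.
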